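(* Let $A$ and $B$ be locally constant (unoriented) algebraic conformal nets, identified with commutative algebras over a field $\mathbf{K}$. Then locally constant algebraic defects between $A$ and $B$ are the same as pairs $(D,\varphi)$ where $D$ is an associative $\mathbf{K}$-algebra and $\varphi\colon A\otimes B\to Z(D)$ is an algebra homomorphism from $A\otimes B$ to the center of $D$.
   Context: Fix a field $\mathbf{K}$; all algebras are associative $\mathbf{K}$-algebras. Let $\mathsf{INT}$ be the category of compact connected oriented submanifolds (intervals) of $\mathbf{R}$ with orientation-preserving embeddings. An algebraic conformal net is a functor $\mathcal{A}\colon\mathsf{INT}\to\mathsf{Algebra}$ with $\mathcal{A}(\overline I)=\mathcal{A}(I)^{\mathrm{op}}$, satisfying isotony (images of embeddings are injective), locality (images of algebras of subintervals with disjoint interiors commute in the algebra of the ambient interval) and strong additivity (if $K=I\cup J$ then $\mathcal{A}(K)$ is generated by the images of $\mathcal{A}(I)$ and $\mathcal{A}(J)$). It is locally constant if it sends every positively-oriented interval to the same algebra $A$ and every embedding between positively-oriented intervals to $\mathrm{id}_A$; by locality $A$ is then commutative, and it is called unoriented if all morphisms are sent to $\mathrm{id}_A$. Let $\mathcal{S}^1$ be the unit circle, colored white on its left open half, black on its right open half, with special points $i$ and $-i$. Bicolored circle intervals are compact connected oriented submanifolds of $\mathcal{S}^1$ not containing $-i$ (and containing a neighborhood of $i$ if they contain $i$); they form a category $\mathsf{INT}_{\circ\bullet}$ with color-preserving orientation-preserving embeddings. Its subcategories of white intervals (contained in the left half), black intervals (contained in the right half) and genuinely bicolored intervals (containing $i$)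 are denoted $\mathsf{INT}_\circ$, $\mathsf{INT}_\bullet$, $\mathsf{INT}_{\circ\bullet}^{\mathrm{gen}}$. The maps $x\mapsto \exp(i\arctan x)$ and $x\mapsto -\exp(i\arctan x)$ identify $\mathbf{R}$ with the black and white halves, inducing functors $\Phi_\bullet,\Phi_\circ\colon\mathsf{INT}\to\mathsf{INT}_{\circ\bullet}$. An algebraic defect between conformal nets $\mathcal{A}$ and $\mathcal{B}$ is a functor $D\colon\mathsf{INT}_{\circ\bullet}\to\mathsf{Algebra}$ with $D(\overline I)=D(I)^{\mathrm{op}}$ together with natural isomorphisms $\sigma_\circ\colon\mathcal{A}\Rightarrow D\circ\Phi_\circ$ and $\sigma_\bullet\colon\mathcal{B}\Rightarrow D\circ\Phi_\bullet$, satisfying isotony on embeddings of genuinely bicolored intervals, locality (images of $D(I)$, $D(J)$ for subintervals with disjoint interiors commute in $D(K)$) and strong additivity. A defect between locally constant nets $A$ and $B$ is locally constant if $D$ sends every orientation-preserving morphism within $\mathsf{INT}_\circ$, within $\mathsf{INT}_\bullet$, and within $\mathsf{INT}_{\circ\bullet}^{\mathrm{gen}}$ to an identity, is constant on morphisms from white intervals to genuinely bicolored intervals and on morphisms from black intervals to genuinely bicolored intervals, and $\sigma_\circ,\sigma_\bullet$ are identities. In the correspondence, $D$ is the value of the defect on genuinely bicolored intervals, and the maps $A\to D$, $B\to D$ induced by inclusions of white, resp. black, intervals into genuinely bicolored ones are the restrictions of $\varphi$ to $A\otimes 1$, resp. $1\otimes B$. *)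

(* Defs.v *)
From HB Require Import structures.
From mathcomp Require Import all_boot all_order all_algebra.
From mathcomp Require Import all_classical all_reals.
From mathcomp Require Import topology normedtype derive trigo.
From mathcomp Require Import Rstruct Rstruct_topology.
From Stdlib Require Import Rdefinitions.

Set Implicit Arguments.
Unset Strict Implicit.
Unset Printing Implicit Defensive.

Import Order.TTheory GRing.Theory Num.Theory.
Import numFieldNormedType.Exports.
Local Open Scope ring_scope.

Definition mulo (X : pzRingType) (o : bool) (x y : X) : X :=
  if o then x * y else y * x.

Definition klinear (K : pzRingType) (X Y : lmodType K) (h : X -> Y) : Prop :=
  forall (k : K) (x y : X), h (k *: x + y) = k *: h x + h y.

(* Unital K-algebra homomorphism  X^(o1) -> Y^(o2)  where X^true = X and
   X^false = X^op (same carrier, reversed multiplication). *)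
Definition alg_hom_or (K : fieldType) (X Y : algType K) (o1 o2 : bool)
    (h : X -> Y) : Prop :=
  [/\ klinear h, h 1 = 1 & forall x y, h (mulo o1 x y) = mulo o2 (h x) (h y)].

Definition alg_hom (K : fieldType) (X Y : algType K) (h : X -> Y) : Prop :=
  alg_hom_or true true h.

Definition center (K : fieldType) (D : algType K) : D -> Prop :=
  fun z => forall y : D, z * y = y * z.

(* Z(D) is a subalgebra of D: a homomorphism into Z(D) is the same as a
   homomorphism into D whose image lies in Z(D). *)
Definition alg_hom_to_center (K : fieldType) (T D : algType K) (h : T -> D) :=
  alg_hom h /\ forall t, center (h t).

(* The K-subalgebra of X generated by a subset S: smallest subset containing S
   and closed under the (unital) K-algebra operations.  (It is the same for X
   and for X^op.) *)
Definition gen_subalg (K : fieldType) (X : algType K) (S : X -> Prop) : X -> Prop :=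
  fun z => forall P : X -> Prop,
    (forall x, S x -> P x) -> P 1 ->
    (forall x y, P x -> P y -> P (x + y)) ->
    (forall (k : K) x, P x -> P (k *: x)) ->
    (forall x y, P x -> P y -> P (x * y)) -> P z.

(* Tensor product of algebras, given by its universal property:
   t : A -> B -> T is K-bilinear, universal among K-bilinear maps into
   K-vector spaces (so (T,t) is the vector-space tensor product A (x)_K B),
   and the multiplication of T is (a (x) b)(a' (x) b') = aa' (x) bb',
   with unit 1 (x) 1. *)
Definition kbilinear (K : fieldType) (A B : lmodType K) (V : lmodType K)
    (beta : A -> B -> V) : Prop :=
  (forall b, klinear (fun a => beta a b)) /\ (forall a, klinear (beta a)).

Definition is_tensor_algebra (K : fieldType) (A B T : algType K)
    (t : A -> B -> T) : Prop :=
  [/\ kbilinear t,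
      (forall (V : lmodType K) (beta : A -> B -> V), kbilinear beta ->
         exists psi : T -> V,
           [/\ klinear psi, (forall a b, psi (t a b) = beta a b) &
               forall psi' : T -> V, klinear psi' ->
                 (forall a b, psi' (t a b) = beta a b) -> psi' =1 psi]),
      t 1 1 = 1 &
      forall a a' b b', t a b * t a' b' = t (a * a') (b * b')].

(* We use the angular chart theta |-> exp(i theta) of S^1 \ {-i}, with
   theta in ]-pi/2, 3pi/2[.  Then  i  <->  pi/2,  the black (right) open half
   is ]-pi/2, pi/2[ and the white (left) open half is ]pi/2, 3pi/2[.
   The maps x |-> exp(i arctan x) and x |-> -exp(i arctan x) send increasing
   x to increasing theta, so the positive orientation of white/black
   intervals is the counterclockwise one (or = true).
   A compact connected oriented 1-submanifold of S^1 not containing -i is an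
   arc [lo, hi] in this chart with an orientation; if it contains i it
   contains a neighbourhood of i, i.e. i is not an endpoint. *)

Notation RR := Rdefinitions.R.

Definition half_pi : RR := pi / 2.

Record bint := BInt {
  lo : RR; hi : RR; ori : bool;
  lo_lt_hi : lo < hi;
  lo_gt : - half_pi < lo;
  hi_lt : hi < 3%:R * half_pi;
  lo_neq_i : lo != half_pi;
  hi_neq_i : hi != half_pi
}.

Definition in_bint (I : bint) (x : RR) : Prop := lo I <= x <= hi I.

Inductive color := White | Black | Gen.

Definition kind (I : bint) : color :=
  if half_pi < lo I then White else if hi I < half_pi then Black else Gen.

Definition smooth (f : RR -> RR) : Prop :=
  forall (n : nat) (x : RR), derivable (derive1n n (f : RR^o -> RR^o)) x 1.

Definition dR (f : RR -> RR) : RR -> RR := derive1 (f : RR^o -> RR^o).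

(* Morphisms of INT_{o.}: color-preserving, orientation-preserving smooth
   embeddings I -> J (in the chart; a smooth map on the compact arc is the
   restriction of a smooth map on R).  Embedding = immersion (nonzero
   derivative) on the compact arc; orientation-preserving means the derivative
   is positive if I and J carry the same orientation relative to the circle,
   negative otherwise. *)
Definition bhom (I J : bint) : Prop :=
  exists f : RR -> RR,
    [/\ smooth f,
        (forall x, in_bint I x -> in_bint J (f x)),
        (forall x, in_bint I x ->
           if ori I == ori J then 0 < dR f x else dR f x < 0),
        (forall x, in_bint I x -> x < half_pi -> f x < half_pi) &
        (forall x, in_bint I x -> half_pi < x -> half_pi < f x)].

Definition subint (I K : bint) : Prop :=
  [/\ lo K <= lo I, hi I <= hi K & ori I = ori K].

(* For a locally constant defect D between A and B with value D on
   (positively oriented) genuinely bicolored intervals, the conditions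
   "sigma_o, sigma_. are identities", "D(I^bar) = D(I)^op" and "locally
   constant" force:
     D(I) = A on white I, B on black I, D on genuinely bicolored I
     (with the opposite multiplication when ori I = false),
     D(e) = id on morphisms inside INT_o, INT_., INT^gen,
     D(e) = f (resp. g) for every morphism from a white (resp. black)
     interval to a genuinely bicolored one (constant value).
   So the defect is given by f : A -> D and g : B -> D; below, def_mor f g
   is its action on morphisms (there are no other morphisms, e.g. none from
   white to black or from genuinely bicolored to white/black; the remaining
   branches are dummies). *)

Section Defect.
Variables (K : fieldType) (A B : comAlgType K) (D : algType K).

Definition dval (c : color) : algType K :=
  match c with White => (A : algType K) | Black => (B : algType K) | Gen => D end.

Definition def_mor (f : A -> D) (g : B -> D) (c1 c2 : color) :
    dval c1 -> dval c2 :=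
  match c1 as c1' , c2 as c2' return dval c1' -> dval c2' with
  | White, White => id
  | Black, Black => id
  | Gen, Gen => id
  | White, Gen => f
  | Black, Gen => g
  | _, _ => fun _ => 0
  end.

Arguments def_mor f g c1 c2 : clear implicits.

Definition Dm (f : A -> D) (g : B -> D) (I J : bint) :
    dval (kind I) -> dval (kind J) := def_mor f g (kind I) (kind J).
Arguments Dm f g I J : clear implicits.

Definition lc_defect (f : A -> D) (g : B -> D) : Prop :=
  [/\
    (* functor to Algebra, with D(I) = value^(ori I) *)
    (forall I J, bhom I J -> alg_hom_or (ori I) (ori J) (Dm f g I J)),
    (forall I, Dm f g I I =1 id) /\
    (forall I J L, bhom I J -> bhom J L ->
       Dm f g I L =1 Dm f g J L \o Dm f g I J),
    (forall I J, kind I = Gen -> kind J = Gen -> bhom I J ->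
       injective (Dm f g I J)),
    (forall Kk I J, subint I Kk -> subint J Kk ->
       (hi I <= lo J \/ hi J <= lo I) ->
       forall x y, Dm f g I Kk x * Dm f g J Kk y = Dm f g J Kk y * Dm f g I Kk x) &
    (forall Kk I J, subint I Kk -> subint J Kk ->
       (forall x, in_bint Kk x <-> in_bint I x \/ in_bint J x) ->
       forall z, gen_subalg
         (fun w => (exists x, w = Dm f g I Kk x) \/ (exists y, w = Dm f g J Kk y)) z)
  ].

End Defect.

(* Main.v *)
From HB Require Import structures.
From mathcomp Require Import all_boot all_order all_algebra.
From mathcomp Require Import all_classical all_reals.
From mathcomp Require Import topology normedtype derive trigo.
From mathcomp Require Import Rstruct Rstruct_topology.
From mathcomp Require Import lra.
Require Import Defs.
Set Implicit Arguments.
Unset Strict Implicit.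
Unset Printing Implicit Defensive.
Import Order.TTheory GRing.Theory Num.Theory.
Import numFieldNormedType.Exports.
Local Open Scope classical_set_scope.
Local Open Scope ring_scope.

Variant kind_spec (I : bint) : color -> Type :=
| KW of half_pi < lo I : kind_spec I White
| KB of hi I < half_pi : kind_spec I Black
| KG of lo I < half_pi & half_pi < hi I : kind_spec I Gen.

Lemma kindP I : kind_spec I (kind I).
Proof.
rewrite /kind; case: ifP => h1; first by constructor.
case: ifP => h2; first by constructor.
have l1 : lo I <= half_pi by rewrite leNgt h1.
have l2 : half_pi <= hi I by rewrite leNgt h2.
constructor; rewrite lt_neqAle ?l1 ?l2 andbT.
- exact: lo_neq_i.
- by rewrite eq_sym; exact: hi_neq_i.
Qed.

Lemma bint_facts I : [/\ lo I < hi I, - half_pi < lo I & hi I < 3%:R * half_pi].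
Proof. by split; [exact: lo_lt_hi | exact: lo_gt | exact: hi_lt]. Qed.

Lemma bhom_hi I J : bhom I J -> (exists x, in_bint I x /\ half_pi < x) -> half_pi < hi J.
Proof.
move=> [f [_ fIJ _ _ fr]] [x [xI xr]].
have := fIJ x xI; have := fr x xI xr; rewrite /in_bint => h /andP[_ h2].
exact: lt_le_trans h h2.
Qed.

Lemma bhom_lo I J : bhom I J -> (exists x, in_bint I x /\ x < half_pi) -> lo J < half_pi.
Proof.
move=> [f [_ fIJ _ fl _]] [x [xI xr]].
have := fIJ x xI; have := fl x xI xr; rewrite /in_bint => h /andP[h2 _].
exact: le_lt_trans h2 h.
Qed.

Lemma in_lo I : in_bint I (lo I).
Proof. by rewrite /in_bint lexx /= ltW // lo_lt_hi. Qed.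
Lemma in_hi I : in_bint I (hi I).
Proof. by rewrite /in_bint lexx andbT ltW // lo_lt_hi. Qed.

Lemma bhom_gen_ori I J : bhom I J -> lo I < half_pi -> half_pi < hi I -> ori I = ori J.
Proof.
move=> [f [sf fIJ df fl fr]] l h.
case: eqP (df) => // _ dneg; exfalso.
have der : forall x, derivable (f : RR^o -> RR^o) x 1.
  by move=> x; have := sf 0%N x.
have cf : {within `[lo I, hi I], continuous (f : RR^o -> RR^o)}.
  by apply: derivable_within_continuous => x _; exact: der.
have := @ler0_derive1_le_cc _ (f : RR^o -> RR^o) (lo I) (hi I) (fun x _ => der x).
have dle : forall x, x \in `](lo I), (hi I)[ -> derive1 (f : RR^o -> RR^o) x <= 0.
  move=> x; rewrite in_itv /= => /andP[a b]; apply: ltW; apply: (dneg x).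
  by rewrite /in_bint !ltW.
move=> /(_ dle cf (hi I) (lo I)).
rewrite !in_itv /= lexx ltW ?lo_lt_hi // lexx => /(_ isT isT isT).
have := fl _ (in_lo I) l; have := fr _ (in_hi I) h.
move=> a b c; have := lt_trans b a; rewrite ltNge c //.
Qed.
Ltac kcontra := exfalso; solve [ lra |
  match goal with H : ?P -> _, H' : ?P |- _ => have := H H'; clear H; kcontra end].

Lemma valid I J : bhom I J ->
  [/\ half_pi < lo I -> half_pi < hi J, hi I < half_pi -> lo J < half_pi,
      lo I < half_pi -> lo J < half_pi & half_pi < hi I -> half_pi < hi J].
Proof.
move=> hb; split=> h.
- apply: (bhom_hi hb); exists (lo I); split; [exact: in_lo | done].
- apply: (bhom_lo hb); exists (hi I); split; [exact: in_hi | done].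
- apply: (bhom_lo hb); exists (lo I); split; [exact: in_lo | done].
- apply: (bhom_hi hb); exists (hi I); split; [exact: in_hi | done].
Qed.

Definition ok (c1 c2 : color) : bool :=
  match c1, c2 with
  | White, White | White, Gen | Black, Black | Black, Gen | Gen, Gen => true
  | _, _ => false end.

Lemma bhom_ok I J : bhom I J -> ok (kind I) (kind J).
Proof.
move=> hb; have [h1 h2 h3 h4] := valid hb.
have := bint_facts I; have := bint_facts J; move=> [? ? ?] [? ? ?].
case: (kindP I) => [hI|hI|hI hI']; case: (kindP J) => [hJ|hJ|hJ hJ'] //=;
  first [have := h1 hI; lra | have := h2 hI; lra | have := h3 hI; lra | have := h4 hI'; lra].
Qed.

Definition okS (c1 c2 : color) : bool :=
  match c1, c2 with
  | White, White | Black, Black | _, Gen => true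
  | _, _ => false end.

Lemma sub_ok I Kk : subint I Kk -> okS (kind I) (kind Kk).
Proof.
move=> [s1 s2 _].
have := bint_facts I; have := bint_facts Kk; move=> [? ? ?] [? ? ?].
by case: (kindP I) => [hI|hI|hI hI']; case: (kindP Kk) => [hJ|hJ|hJ hJ'] //=; lra.
Qed.

Lemma disj I J : (hi I <= lo J \/ hi J <= lo I) -> kind I = Gen -> kind J = Gen -> False.
Proof.
move=> hd; case: (kindP I) => [hI|hI|hI hI'] //; case: (kindP J) => [hJ|hJ|hJ hJ'] // _ _.
by case: hd; lra.
Qed.

Section LC.
Variables (K : fieldType) (A B : comAlgType K) (D : algType K).

Lemma alg_hom_or_com (X : comAlgType K) (o1 o2 : bool) : alg_hom_or (X:=X) (Y:=X) o1 o2 id.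
Proof.
split=> // x y; case: o1; case: o2 => //=; rewrite /mulo /=; exact: mulrC.
Qed.

Lemma alg_hom_or_id (X : algType K) (o : bool) : alg_hom_or (X:=X) (Y:=X) o o id.
Proof. by split. Qed.

Lemma alg_hom_or_central (X : comAlgType K) (h : X -> D) o1 o2 :
  alg_hom h -> (forall x, center (h x)) -> alg_hom_or o1 o2 h.
Proof.
move=> [hl h1 hm] hc; split=> // x y.
have := hm x y; rewrite /mulo /= => e.
case: o1; case: o2; rewrite /= ?e // ?(mulrC y x) ?e //; exact: hc.
Qed.

Lemma gen_sub (X : algType K) (S : X -> Prop) w : S w -> gen_subalg S w.
Proof. by move=> hw P HS _ _ _ _; apply: HS. Qed.

Variables (f : A -> D) (g : B -> D).
Hypotheses (hf : alg_hom f) (hg : alg_hom g)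
  (cf : forall a, center (f a)) (cg : forall b, center (g b)).

Lemma lc_of : lc_defect f g.
Proof.
split.
- move=> I J hb; have [h1 h2 h3 h4] := valid hb.
  have := bint_facts I; have := bint_facts J; move=> [? ? ?] [? ? ?].
  rewrite /Dm; case: (kindP I) => [hI|hI|hI hI']; case: (kindP J) => [hJ|hJ|hJ hJ'] /=;
    try kcontra.
  + exact: alg_hom_or_com.
  + exact: alg_hom_or_central.
  + exact: alg_hom_or_com.
  + exact: alg_hom_or_central.
  + rewrite (bhom_gen_ori hb hI hI'); exact: alg_hom_or_id.
- split; first by move=> I; rewrite /Dm; case: (kindP I).
  move=> I J L hb1 hb2; move: (bhom_ok hb1) (bhom_ok hb2).
  by rewrite /Dm; case: (kind I); case: (kind J); case: (kind L).
- by move=> I J; rewrite /Dm; case: (kindP I); case: (kindP J) => //= *; move=> x y.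
- move=> Kk I J sI sJ hd.
  move: (sub_ok sI) (sub_ok sJ) (@disj I J hd).
  rewrite /Dm; case: (kind Kk); case: (kind I); case: (kind J) => //= _ _ hh x y;
    try (by apply: mulrC); try (by case: hh);
    try (by rewrite cf); try (by rewrite cg); try (by rewrite -cf); by rewrite -cg.
- move=> Kk I J [s1 s2 _] [s3 s4 _] hc z.
  have := bint_facts I; have := bint_facts J; have := bint_facts Kk.
  move=> [? ? ?] [? ? ?] [? ? ?].
  apply: gen_sub; move: z hc.
  rewrite /Dm; case: (kindP Kk) => [hK|hK|hK hK'] z hc.
  + left; case: (kindP I) => [hI|hI|hI hI'] /=; try kcontra; by exists z.
  + left; case: (kindP I) => [hI|hI|hI hI'] /=; try kcontra; by exists z.
  + have : in_bint Kk half_pi by rewrite /in_bint !ltW.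
    move/hc=> [] /andP[l1 l2].
    * left; case: (kindP I) => [hI|hI|hI hI'] /=; try kcontra; by exists z.
    * right; case: (kindP J) => [hJ|hJ|hJ hJ'] /=; try kcontra; by exists z.
Qed.
End LC.

Lemma hp1 : 1 <= half_pi. Proof. exact: pihalf_ge1. Qed.
Lemma hp2 : half_pi < 2. Proof. exact: pihalf_lt2. Qed.

Lemma neqhp (x : RR) : (x < half_pi) || (half_pi < x) -> x != half_pi.
Proof. by case/orP=> h; [rewrite lt_eqF | rewrite gt_eqF]. Qed.

Ltac numt := have := hp1; have := hp2; rewrite /half_pi => *; lra.
Ltac neqt := apply: neqhp; apply/orP; first [left; numt | right; numt].

Definition mkb (a b : RR) (h1 : a < b) (h2 : - half_pi < a) (h3 : b < 3%:R * half_pi)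
  (h4 : a != half_pi) (h5 : b != half_pi) : bint := @BInt a b true h1 h2 h3 h4 h5.

Definition W0 : bint.
Proof. apply: (@mkb 2 (5/2)); first [numt | neqt]. Defined.
Definition G0 : bint.
Proof. apply: (@mkb 0 (5/2)); first [numt | neqt]. Defined.
Definition B0 : bint.
Proof. apply: (@mkb 0 (1/2)); first [numt | neqt]. Defined.
Definition Gc : bint.
Proof. apply: (@mkb 0 2); first [numt | neqt]. Defined.
Definition Gd : bint.
Proof. apply: (@mkb (1/2) (5/2)); first [numt | neqt]. Defined.

Lemma smooth_id : smooth id.
Proof.
have H : forall n, derive1n n (id : RR^o -> RR^o) = id \/
    exists c : RR, derive1n n (id : RR^o -> RR^o) = cst c.
  elim=> [|n [IH|[c IH]]]; first by left.
  - right; exists 1; rewrite derive1nS IH; apply/funext => x; exact: derive1_id.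
  - right; exists 0; rewrite derive1nS IH; apply/funext => x; exact: derive1_cst.
move=> n x; case: (H n) => [->|[c ->]]; [exact: derivable_id | exact: derivable_cst].
Qed.

Lemma bhom_sub (I J : bint) : ori I = ori J -> lo J <= lo I -> hi I <= hi J ->
  (lo I < half_pi -> lo J < half_pi) -> bhom I J.
Proof.
move=> o l h _; exists id; split.
- exact: smooth_id.
- by move=> x /andP[a b]; rewrite /in_bint (le_trans l a) (le_trans b h).
- by move=> x _; rewrite o eqxx /dR derive1_id ltr01.
- by [].
- by [].
Qed.

Lemma kindW I : half_pi < lo I -> kind I = White.
Proof. by case: (kindP I) => // *; exfalso; have := lo_lt_hi I; lra. Qed.
Lemma kindB I : hi I < half_pi -> kind I = Black.
Proof. by case: (kindP I) => // *; exfalso; have := lo_lt_hi I; lra. Qed.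
Lemma kindG I : lo I < half_pi -> half_pi < hi I -> kind I = Gen.
Proof. by case: (kindP I) => // *; exfalso; have := lo_lt_hi I; lra. Qed.

Lemma kW0 : kind W0 = White. Proof. apply: kindW => /=; numt. Qed.
Lemma kB0 : kind B0 = Black. Proof. apply: kindB => /=; numt. Qed.
Lemma kG0 : kind G0 = Gen. Proof. apply: kindG => /=; numt. Qed.
Lemma kGc : kind Gc = Gen. Proof. apply: kindG => /=; numt. Qed.
Lemma kGd : kind Gd = Gen. Proof. apply: kindG => /=; numt. Qed.

Section LCto.
Variables (K : fieldType) (A B : comAlgType K) (D : algType K).
Variables (f : A -> D) (g : B -> D).
Hypothesis H : lc_defect f g.

Lemma lc_f_hom : alg_hom f.
Proof.
case: H => H1 _ _ _ _.
have hb : bhom W0 G0 by apply: bhom_sub => //=; numt.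
by move: (H1 _ _ hb); rewrite /Dm kW0 kG0.
Qed.

Lemma lc_g_hom : alg_hom g.
Proof.
case: H => H1 _ _ _ _.
have hb : bhom B0 G0 by apply: bhom_sub => //=; numt.
by move: (H1 _ _ hb); rewrite /Dm kB0 kG0.
Qed.

Lemma lc_f_center a : center (f a).
Proof.
case: H => _ _ _ H4 _ y.
have s1 : subint W0 G0 by split => //=; numt.
have s2 : subint Gc G0 by split => //=; numt.
have hd : hi W0 <= lo Gc \/ hi Gc <= lo W0 by right => /=; numt.
by move: (H4 _ _ _ s1 s2 hd); rewrite /Dm kW0 kG0 kGc => /(_ a y).
Qed.

Lemma lc_g_center b : center (g b).
Proof.
case: H => _ _ _ H4 _ y.
have s1 : subint B0 G0 by split => //=; numt.
have s2 : subint Gd G0 by split => //=; numt.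
have hd : hi B0 <= lo Gd \/ hi Gd <= lo B0 by left => /=; numt.
by move: (H4 _ _ _ s1 s2 hd); rewrite /Dm kB0 kG0 kGd => /(_ b y).
Qed.
End LCto.

Section Tens.
Variables (K : fieldType) (A B : comAlgType K) (T : algType K) (t : A -> B -> T).
Hypothesis Ht : is_tensor_algebra t.

Lemma ext_tensor (V : lmodType K) (p1 p2 : T -> V) : klinear p1 -> klinear p2 ->
  (forall a b, p1 (t a b) = p2 (t a b)) -> p1 =1 p2.
Proof.
move=> l1 l2 e; case: Ht => [[tl tr] univ _ _].
have bb : kbilinear (fun a b => p1 (t a b)).
  by split => [b|a] k x y /=; rewrite ?tl ?tr l1.
have [psi [_ _ U]] := univ V _ bb.
move=> z; rewrite (U p1 l1 (fun _ _ => erefl)).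
by rewrite (U p2 l2 (fun a b => esym (e a b))).
Qed.

Lemma lin_mulr (X Y : algType K) (p : X -> Y) c : klinear p -> klinear (fun x => p x * c).
Proof. by move=> l k x y; rewrite l mulrDl scalerAl. Qed.
Lemma lin_mull (X Y : algType K) (p : X -> Y) c : klinear p -> klinear (fun x => c * p x).
Proof. by move=> l k x y; rewrite l mulrDr scalerAr. Qed.
Lemma lin_cmulr (X Y : algType K) (p : X -> Y) c : klinear p -> klinear (fun x => p (x * c)).
Proof. by move=> l k x y; rewrite mulrDl -scalerAl l. Qed.
Lemma lin_cmull (X Y : algType K) (p : X -> Y) c : klinear p -> klinear (fun x => p (c * x)).
Proof. by move=> l k x y; rewrite mulrDr -scalerAr l. Qed.

End Tens.

Theorem mainTheorem2 (K : fieldType) (A B : comAlgType K) (D : algType K)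
    (T : algType K) (t : A -> B -> T) :
  is_tensor_algebra t ->
  (forall phi : T -> D, alg_hom_to_center phi ->
     lc_defect (fun a => phi (t a 1)) (fun b => phi (t 1 b))) /\
  (forall (f : A -> D) (g : B -> D), lc_defect f g ->
     exists phi : T -> D,
       [/\ alg_hom_to_center phi,
           (forall a, f a = phi (t a 1)),
           (forall b, g b = phi (t 1 b)) &
           forall psi : T -> D, alg_hom_to_center psi ->
             (forall a, f a = psi (t a 1)) -> (forall b, g b = psi (t 1 b)) ->
             psi =1 phi]).
Proof.
move=> Ht; have Ht' := Ht; case: Ht' => [[tl tr] univ t11 tm].
split.
  move=> phi [[pl p1 pm] pc]; apply: lc_of => //.
  - split.
    + by move=> k x y; rewrite tl pl.
    + by rewrite t11 p1.
    + by move=> x y /=; have := pm (t x 1) (t y 1); rewrite /= tm mulr1 => <-.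
  - split.
    + by move=> k x y; rewrite tr pl.
    + by rewrite t11 p1.
    + by move=> x y /=; have := pm (t 1 x) (t 1 y); rewrite /= tm mulr1 => <-.
move=> f g hd.
have [fl f1 fm] := lc_f_hom hd; have [gl g1 gm] := lc_g_hom hd.
have fc := lc_f_center hd; have gc := lc_g_center hd.
have bb : kbilinear (fun a b => f a * g b).
  split => [b|a] k x y /=.
  - by rewrite fl mulrDl scalerAl.
  - by rewrite gl mulrDr scalerAr.
have [psi [pl pt _]] := univ _ _ bb.
have pmul : forall x y, psi (x * y) = psi x * psi y.
  have pure : forall a b y, psi (t a b * y) = psi (t a b) * psi y.
    move=> a b; apply: (ext_tensor Ht).
    - exact: lin_cmull.
    - exact: lin_mull.
    move=> a' b'; rewrite tm !pt.
    have := fm a a'; have := gm b b'; rewrite /mulo /=.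
    move=> -> ->.
    by rewrite !mulrA -[f a * f a' * g b]mulrA (fc a' (g b)) mulrA.
  move=> x y; apply: (ext_tensor Ht (p1 := fun x => psi (x * y)) (p2 := fun x => psi x * psi y)).
  - exact: lin_cmulr.
  - exact: lin_mulr.
  - by move=> a b; exact: pure.
have pcent : forall z, center (psi z).
  move=> z w; apply: (ext_tensor Ht (p1 := fun z => psi z * w) (p2 := fun z => w * psi z)).
  - exact: lin_mulr.
  - exact: lin_mull.
  - by move=> a b; rewrite pt -mulrA (gc b w) mulrA -(fc a w) mulrA.
have phom : alg_hom_to_center psi.
  split; last exact: pcent.
  split => //; first by rewrite -t11 pt f1 g1 mulr1.
exists psi; split => //.
- by move=> a; rewrite pt g1 mulr1.
- by move=> b; rewrite pt f1 mul1r.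
move=> psi' [[ql q1 qm] qc] ef eg.
apply: (ext_tensor Ht) => // a b; rewrite pt.
have -> : t a b = t a 1 * t 1 b by rewrite tm mulr1 mul1r.
by rewrite (qm _ _) /= -ef -eg.
Qed.
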